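(* Assume [LJ1]–[LJ4], let $\ell>\gamma$, $u_0^{(1)},u_1^{(1)}>0$, let $k_n=(k_n^1,k_n^2)$ satisfy (K), and let $\mathcal T_n=\{t_n^0,\dots,t_n^{r_n}\}$ with $0=t_n^0<\dots<t_n^{r_n}=n$. Let $(u_n)$ satisfy $\sup_n\hat H_{1,n}^{\ell,k_n,\mathcal T_n}(u_n)<+\infty$. Let $(h_n)\subset\mathbb N$ be such that $k_n^1\le t_n^{h_n}<t_n^{h_n+1}\le k_n^2$ and $\liminf_{n\to\infty}(t_n^{h_n+1}-t_n^{h_n})=+\infty$. Then $$\lim_{n\to\infty}\frac{u_n^{t_n^{h_n}+1}-u_n^{t_n^{h_n}}}{\lambda_n}=\gamma.$$
   Context: Potentials: $J_1,J_2:\mathbb R\to(-\infty,+\infty]$; $J_{CB}:=J_1+J_2$; $J_0(z):=J_2(z)+\frac12\inf\{J_1(z_1)+J_1(z_2):z_1+z_2=2z\}$; $J_0^{**}$ is the convex lower semicontinuous envelope of $J_0$. Hypotheses: [LJ1] $\{z:J_0(z)=J_0^{**}(z)\}\cap\{z:J_0\text{ is affine in a neighbourhood of }z\}=\emptyset$. [LJ2] for every $z$ with $J_0(z)=J_0^{**}(z)$, the set $\{(z_1,z_2):z_1+z_2=2z,\ J_0(z)=J_2(z)+\frac12(J_1(z_1)+J_1(z_2))\}$ has exactly one element. [LJ3] $J_1,J_2$ are $C^{1,\alpha}$ on their domains for some $0<\alpha\le1$, $J_0$ is $C^1$ on its domain, $\operatorname{dom}J_1=\operatorname{dom}J_2\supset(0,+\infty)$,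 $\lim_{z\to+\infty}J_j(z)=0$ ($j=1,2$) and $\lim_{z\to+\infty}J_0(z)=:J_0(+\infty)\in\mathbb R$. [LJ4] there is a convex $\Psi:\mathbb R\to[0,+\infty]$ with $\lim_{z\to-\infty}\Psi(z)/|z|=+\infty$ and constants $c_1,c_2>0$ with $c_1(\Psi(z)-1)\le J_j(z)\le c_2\max\{\Psi(z),|z|\}$ for all $z\in\mathbb R$, $j=1,2$; there are $\delta_1,\delta_2,\gamma>0$ with $\{\delta_j\}=\operatorname{argmin}J_j$ and $\{\gamma\}=\operatorname{argmin}J_0$; $J_j$ is strictly convex on $(-\infty,\delta_j)\cap\operatorname{dom}J_j$; $J_0(\gamma)<J_0(+\infty)$; and $J_0(z)=J_0^{**}(z)$ for all $z\le\gamma$. Discrete setting: $\lambda_n=1/n$; $\mathcal A_n(0,1)$ is the set of continuous $u:[0,1]\to\mathbb R$ affine on each $(i\lambda_n,(i+1)\lambda_n)$, $i=0,\dots,n-1$; $u^i:=u(i\lambda_n)$. Boundary conditions (BC): $u^0=0$, $u^1=\lambda_nu_0^{(1)}$, $u^{n-1}=\ell-\lambda_nu_1^{(1)}$, $u^n=\ell$. Quasicontinuum energy: for integers $0<k_n^1<k_n^2<n-2$ and $u\in\mathcal A_n(0,1)$ satisfying (BC), $\hat H_n^{\ell,k_n}(u)=\sum_{i=0}^{n-1}\lambda_nJ_1(\frac{u^{i+1}-u^i}{\lambda_n})+\sum_{i=0}^{k_n^1-1}\lambda_nJ_2(\frac{u^{i+2}-u^i}{2\lambda_n})+\sum_{i=k_n^1}^{k_n^2-2}\frac{\lambda_n}{2}\{J_2(\frac{u^{i+1}-u^i}{\lambda_n})+J_2(\frac{u^{i+2}-u^{i+1}}{\lambda_n})\}+\sum_{i=k_n^2-1}^{n-2}\lambda_nJ_2(\frac{u^{i+2}-u^i}{2\lambda_n})$,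 and $+\infty$ otherwise. For $\mathcal T_n=\{t_n^0<\dots<t_n^{r_n}\}\subset\{0,\dots,n\}$ with $t_n^0=0,t_n^{r_n}=n$, $\mathcal A_{\mathcal T_n}(0,1)$ is the set of $u$ affine on each $(t_n^i\lambda_n,t_n^{i+1}\lambda_n)$, and $\hat H_n^{\ell,k_n,\mathcal T_n}(u)=\hat H_n^{\ell,k_n}(u)$ if $u\in\mathcal A_{\mathcal T_n}(0,1)$, $+\infty$ otherwise. Assumption (K): $k_n^1\to\infty$, $n-k_n^2\to\infty$, $\lambda_nk_n^1\to0$, $\lambda_n(n-k_n^2)\to0$. First order energy: $\hat H_{1,n}^{\ell,k_n,\mathcal T_n}(u):=\big(\hat H_n^{\ell,k_n,\mathcal T_n}(u)-J_0^{**}(\ell)\big)/\lambda_n$. *)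

(* Defs.v *)
From Stdlib Require Import Reals Lra Lia ClassicalEpsilon.
Open Scope R_scope.

Inductive ER : Type := Fin (x : R) | PInf | MInf.

Definition ER_le (x y : ER) : Prop :=
  match x, y with
  | MInf, _ => True
  | _, PInf => True
  | Fin a, Fin b => a <= b
  | _, _ => False
  end.

Definition ER_lt (x y : ER) : Prop := ER_le x y /\ x <> y.

(* Addition; +oo is absorbing (the case +oo + -oo never occurs below
   under the standing hypotheses). *)
Definition ER_plus (x y : ER) : ER :=
  match x, y with
  | PInf, _ | _, PInf => PInf
  | MInf, _ | _, MInf => MInf
  | Fin a, Fin b => Fin (a + b)
  end.

Definition ER_neg (x : ER) : ER :=
  match x with Fin a => Fin (- a) | PInf => MInf | MInf => PInf end.

(* Multiplication by a (positive) real scalar. *)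
Definition ER_scale (c : R) (x : ER) : ER :=
  match x with Fin a => Fin (c * a) | e => e end.

Definition ER_max (x y : ER) : ER :=
  match x, y with
  | PInf, _ | _, PInf => PInf
  | MInf, e | e, MInf => e
  | Fin a, Fin b => Fin (Rmax a b)
  end.

(* real part (used only where the value is known to be finite) *)
Definition fval (x : ER) : R := match x with Fin a => a | _ => 0 end.

Definition is_ER_glb (S : ER -> Prop) (m : ER) : Prop :=
  (forall x, S x -> ER_le m x) /\ (forall b, (forall x, S x -> ER_le b x) -> ER_le b m).
Definition is_ER_lub (S : ER -> Prop) (m : ER) : Prop :=
  (forall x, S x -> ER_le x m) /\ (forall b, (forall x, S x -> ER_le x b) -> ER_le m b).

Definition ER_inf (S : ER -> Prop) : ER :=
  match excluded_middle_informative (exists m, is_ER_glb S m) with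
  | left H => proj1_sig (constructive_indefinite_description _ H)
  | right _ => PInf
  end.
Definition ER_sup (S : ER -> Prop) : ER :=
  match excluded_middle_informative (exists m, is_ER_lub S m) with
  | left H => proj1_sig (constructive_indefinite_description _ H)
  | right _ => MInf
  end.

Definition dom (f : R -> ER) (z : R) : Prop := f z <> PInf.

Definition ER_convex (f : R -> ER) : Prop :=
  forall x y t, 0 < t < 1 ->
    ER_le (f (t * x + (1 - t) * y)) (ER_plus (ER_scale t (f x)) (ER_scale (1 - t) (f y))).

Definition ER_lsc (f : R -> ER) : Prop :=
  forall z a, ER_lt (Fin a) (f z) ->
    exists d, d > 0 /\ forall y, Rabs (y - z) < d -> ER_lt (Fin a) (f y).

(** Strict convexity on a set S (on which f is finite). *)
Definition strictly_convex_on (S : R -> Prop) (f : R -> ER) : Prop :=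
  forall x y t, S x -> S y -> x <> y -> 0 < t < 1 ->
    ER_lt (f (t * x + (1 - t) * y)) (Fin (t * fval (f x) + (1 - t) * fval (f y))).

Definition J0 (J1 J2 : R -> ER) (z : R) : ER :=
  ER_plus (J2 z)
    (ER_scale (1/2)
       (ER_inf (fun v => exists z1 z2, z1 + z2 = 2 * z /\ v = ER_plus (J1 z1) (J1 z2)))).

Definition conv_lsc_env (f : R -> ER) (z : R) : ER :=
  ER_sup (fun v => exists g : R -> ER,
             (forall w, g w <> MInf) /\ ER_convex g /\ ER_lsc g /\
             (forall w, ER_le (g w) (f w)) /\ v = g z).

Definition ER_lim_pinf (f : R -> ER) (L : R) : Prop :=
  forall eps, eps > 0 -> exists M, forall z, z > M ->
    exists v, f z = Fin v /\ Rabs (v - L) < eps.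

Definition deriv_within (D : R -> Prop) (f : R -> R) (x l : R) : Prop :=
  forall eps, eps > 0 -> exists d, d > 0 /\ forall y, D y -> y <> x -> Rabs (y - x) < d ->
    Rabs ((f y - f x) / (y - x) - l) < eps.

Definition C1_on (D : R -> Prop) (f : R -> ER) : Prop :=
  exists f' : R -> R,
    (forall x, D x -> deriv_within D (fun y => fval (f y)) x (f' x)) /\
    (forall x, D x -> forall eps, eps > 0 -> exists d, d > 0 /\
        forall y, D y -> Rabs (y - x) < d -> Rabs (f' y - f' x) < eps).

Definition C1alpha_on (D : R -> Prop) (f : R -> ER) (alpha : R) : Prop :=
  exists f' : R -> R,
    (forall x, D x -> deriv_within D (fun y => fval (f y)) x (f' x)) /\
    (forall a b, a <= b -> (forall x, a <= x <= b -> D x) ->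
       exists C, forall x y, a <= x <= b -> a <= y <= b -> x <> y ->
         Rabs (f' x - f' y) <= C * Rpower (Rabs (x - y)) alpha).

Definition lam (n : nat) : R := / INR n.

(* nodal value u^i = u(i * lambda_n) *)
Definition node (u : R -> R) (n i : nat) : R := u (INR i * lam n).

Definition affine_on (a b : R) (u : R -> R) : Prop :=
  exists p q, forall x, a < x < b -> u x = p * x + q.

Definition cont_on01 (u : R -> R) : Prop :=
  forall x, 0 <= x <= 1 -> forall eps, eps > 0 -> exists d, d > 0 /\
    forall y, 0 <= y <= 1 -> Rabs (y - x) < d -> Rabs (u y - u x) < eps.

Definition in_An (n : nat) (u : R -> R) : Prop :=
  cont_on01 u /\
  forall i, (i < n)%nat -> affine_on (INR i * lam n) (INR (i + 1)%nat * lam n) u.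

Definition in_AT (n r : nat) (t : nat -> nat) (u : R -> R) : Prop :=
  forall i, (i < r)%nat -> affine_on (INR (t i) * lam n) (INR (t (i + 1)%nat) * lam n) u.

Definition BC (n : nat) (l v0 v1 : R) (u : R -> R) : Prop :=
  node u n 0%nat = 0 /\ node u n 1%nat = lam n * v0 /\
  node u n (n - 1)%nat = l - lam n * v1 /\ node u n n = l.

Fixpoint ERsum (f : nat -> ER) (a k : nat) : ER :=
  match k with
  | O => Fin 0
  | S k' => ER_plus (f a) (ERsum f (S a) k')
  end.

Definition Hn (J1 J2 : R -> ER) (n : nat) (l v0 v1 : R) (k1 k2 : nat) (u : R -> R) : ER :=
  let L := lam n in
  let d1 := fun i => (node u n (i + 1)%nat - node u n i) / L in
  let d2 := fun i => (node u n (i + 2)%nat - node u n i) / (2 * L) in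
  match excluded_middle_informative (in_An n u /\ BC n l v0 v1 u) with
  | left _ =>
      ER_plus (ERsum (fun i => ER_scale L (J1 (d1 i))) 0 n)
     (ER_plus (ERsum (fun i => ER_scale L (J2 (d2 i))) 0 k1)
     (ER_plus (ERsum (fun i => ER_scale (L / 2) (ER_plus (J2 (d1 i)) (J2 (d1 (i + 1)%nat))))
                     k1 (k2 - 1 - k1)%nat)
              (ERsum (fun i => ER_scale L (J2 (d2 i))) (k2 - 1)%nat (n - k2)%nat)))
  | right _ => PInf
  end.

Definition HnT (J1 J2 : R -> ER) (n : nat) (l v0 v1 : R) (k1 k2 r : nat) (t : nat -> nat)
  (u : R -> R) : ER :=
  match excluded_middle_informative (in_AT n r t u) with
  | left _ => Hn J1 J2 n l v0 v1 k1 k2 u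
  | right _ => PInf
  end.

Definition H1nT (J1 J2 : R -> ER) (n : nat) (l v0 v1 : R) (k1 k2 r : nat) (t : nat -> nat)
  (u : R -> R) : ER :=
  ER_scale (/ lam n)
    (ER_plus (HnT J1 J2 n l v0 v1 k1 k2 r t u) (ER_neg (conv_lsc_env (J0 J1 J2) l))).

(* Main.v *)
Require Import Defs.
From Stdlib Require Import Reals Lra Lia Classical ClassicalEpsilon.
Open Scope R_scope.

Lemma ER_le_trans x y z : ER_le x y -> ER_le y z -> ER_le x z.
Proof. destruct x, y, z; simpl; intros; try lra; tauto. Qed.

Lemma ER_le_PInf_inv x : ER_le PInf x -> x = PInf.
Proof. destruct x; simpl; tauto. Qed.

Lemma ER_le_Fin_inv a x : ER_le x (Fin a) -> x <> MInf -> exists b, x = Fin b /\ b <= a.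
Proof. destruct x; simpl; intros; try tauto; eauto. Qed.

Lemma ER_plus_fin x y v : x <> MInf -> y <> MInf -> ER_plus x y = Fin v ->
  exists a b, x = Fin a /\ y = Fin b /\ v = a + b.
Proof. destruct x, y; simpl; intros; try congruence. inversion H1; eauto. Qed.

Lemma ER_plus_nm x y : x <> MInf -> y <> MInf -> ER_plus x y <> MInf.
Proof. destruct x, y; simpl; congruence. Qed.

Lemma ER_scale_nm c x : x <> MInf -> ER_scale c x <> MInf.
Proof. destruct x; simpl; congruence. Qed.

Lemma ER_scale_fin c x v : ER_scale c x = Fin v -> exists a, x = Fin a /\ v = c * a.
Proof. destruct x; simpl; intros; try congruence. inversion H; eauto. Qed.

Lemma glb_exists (S : ER -> Prop) b : (forall x, S x -> ER_le (Fin b) x) ->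
  exists m, is_ER_glb S m.
Proof.
  intros Hb.
  destruct (classic (exists r, S (Fin r))) as [[r0 Hr0]|Hno].
  - set (E := fun y => S (Fin (- y))).
    assert (HE : bound E).
    { exists (-b). intros y Hy. specialize (Hb _ Hy). simpl in Hb. lra. }
    assert (HE2 : exists y, E y). { exists (- r0). unfold E. rewrite Ropp_involutive. auto. }
    destruct (completeness E HE HE2) as [s [Hs1 Hs2]].
    exists (Fin (- s)). split.
    + intros x Hx. destruct x; simpl; auto.
      * assert (E (- x)) by (unfold E; rewrite Ropp_involutive; auto).
        specialize (Hs1 _ H). lra.
      * specialize (Hb _ Hx). simpl in Hb. tauto.
    + intros c Hc. destruct c; simpl; auto.
      * assert (s <= - x). { apply Hs2. intros y Hy. specialize (Hc _ Hy). simpl in Hc. lra. }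
        lra.
      * specialize (Hc _ Hr0). simpl in Hc. tauto.
  - exists PInf. split.
    + intros x Hx. destruct x; simpl; auto.
      * apply Hno; eauto.
      * specialize (Hb _ Hx). simpl in Hb. tauto.
    + intros c _. destruct c; simpl; auto.
Qed.

Lemma ER_inf_spec (S : ER -> Prop) b : (forall x, S x -> ER_le (Fin b) x) ->
  is_ER_glb S (ER_inf S).
Proof.
  intros Hb. unfold ER_inf.
  destruct (excluded_middle_informative (exists m, is_ER_glb S m)) as [H|H].
  - destruct (constructive_indefinite_description _ H) as [m Hm]. simpl. auto.
  - exfalso. apply H. eapply glb_exists; eauto.
Qed.

Lemma ER_sup_cases (S : ER -> Prop) : is_ER_lub S (ER_sup S) \/ ER_sup S = MInf.
Proof.
  unfold ER_sup.
  destruct (excluded_middle_informative (exists m, is_ER_lub S m)) as [H|H].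
  - destruct (constructive_indefinite_description _ H) as [m Hm]. simpl. auto.
  - auto.
Qed.

Fixpoint rsum (f : nat -> R) (a k : nat) : R :=
  match k with O => 0 | S k' => f a + rsum f (S a) k' end.

Lemma rsum_split f a j k : rsum f a (j + k) = rsum f a j + rsum f (a + j) k.
Proof.
  revert a. induction j; intros a; simpl.
  - rewrite Nat.add_0_r. lra.
  - rewrite IHj. replace (S a + j)%nat with (a + S j)%nat by lia. lra.
Qed.

Lemma rsum_ext f g a k : (forall i, (a <= i < a + k)%nat -> f i = g i) -> rsum f a k = rsum g a k.
Proof.
  revert a. induction k; intros a H; simpl; auto.
  rewrite H by lia. rewrite IHk; auto. intros; apply H; lia.
Qed.

Lemma rsum_ge f a k m : (forall i, (a <= i < a + k)%nat -> m <= f i) -> INR k * m <= rsum f a k.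
Proof.
  revert a. induction k; intros a H; cbn [rsum].
  - simpl; lra.
  - rewrite S_INR. assert (m <= f a) by (apply H; lia).
    assert (INR k * m <= rsum f (S a) k) by (apply IHk; intros; apply H; lia). lra.
Qed.

Lemma rsum_const c a k : rsum (fun _ => c) a k = INR k * c.
Proof. revert a; induction k; intros; cbn [rsum]; [simpl; lra|]. rewrite IHk, S_INR; lra. Qed.

Lemma rsum_plus f g a k : rsum (fun i => f i + g i) a k = rsum f a k + rsum g a k.
Proof. revert a; induction k; intros; simpl; [lra|]. rewrite IHk; lra. Qed.

Lemma rsum_scal c f a k : rsum (fun i => c * f i) a k = c * rsum f a k.
Proof. revert a; induction k; intros; simpl; [lra|]. rewrite IHk; lra. Qed.

Lemma rsum_shift f a k : rsum (fun i => f (i + 1)%nat) a k = rsum f (a + 1) k.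
Proof. revert a; induction k; intros; simpl; auto. rewrite IHk. f_equal. Qed.

Lemma rsum_last f a k : rsum f a (S k) = rsum f a k + f (a + k)%nat.
Proof. replace (S k) with (k + 1)%nat by lia. rewrite rsum_split. simpl. lra. Qed.

Lemma rsum_pairs f n : (1 <= n)%nat ->
  rsum (fun i => (f i + f (i + 1)%nat) / 2) 0 (n - 1) = rsum f 0 n - (f 0%nat + f (n - 1)%nat) / 2.
Proof.
  intros Hn.
  assert (E : rsum (fun i => (f i + f (i + 1)%nat) / 2) 0 (n - 1) =
     / 2 * rsum f 0 (n - 1) + / 2 * rsum f 1 (n - 1)).
  { assert (Hs : rsum f 1 (n-1) = rsum (fun i => f (i+1)%nat) 0 (n-1)) by (rewrite rsum_shift; reflexivity).
    rewrite Hs. rewrite <- !rsum_scal.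
    rewrite <- rsum_plus. apply rsum_ext. intros; simpl. lra. }
  rewrite E.
  destruct n as [|n]; [lia|]. replace (S n - 1)%nat with n by lia.
  assert (A1 : rsum f 0 (S n) = f 0%nat + rsum f 1 n) by reflexivity.
  assert (A2 : rsum f 0 (S n) = rsum f 0 n + f n) by (rewrite rsum_last; simpl; reflexivity).
  lra.
Qed.

Lemma ERsum_fin f a k : (forall j, f j <> MInf) -> ERsum f a k <> PInf ->
  ERsum f a k = Fin (rsum (fun j => fval (f j)) a k) /\
  forall j, (a <= j < a + k)%nat -> f j = Fin (fval (f j)).
Proof.
  intros Hf. revert a. induction k; intros a H; simpl.
  - split; auto. intros; lia.
  - simpl in H. specialize (Hf a).
    destruct (f a) eqn:Efa; try congruence.
    + destruct (ERsum f (S a) k) eqn:Es; simpl in H; try congruence.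
      * destruct (IHk (S a)) as [H1 H2]; [congruence|]. rewrite Es in H1. inversion H1.
        split; [simpl; reflexivity|]. intros j Hj.
        destruct (Nat.eq_dec j a). subst; rewrite Efa; reflexivity. apply H2; lia.
      * destruct (IHk (S a)) as [H1 H2]; [congruence|]. congruence.
    + simpl in H. congruence.
Qed.


Lemma ER_plus_lb a b x y : ER_le (Fin a) x -> ER_le (Fin b) y -> ER_le (Fin (a + b)) (ER_plus x y).
Proof. destruct x, y; simpl; intros; try tauto; lra. Qed.

Lemma ER_not_le_Fin x a : ~ ER_le x (Fin a) -> ER_le (Fin a) x.
Proof. destruct x; simpl; intros; auto; try lra; tauto. Qed.

Lemma J0_le (J1 J2 : R -> ER) j1min (HJ1b : forall z, ER_le (Fin j1min) (J1 z)) :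
  forall a x y p q1 q2, x + y = 2 * a -> J2 a = Fin p -> J1 x = Fin q1 -> J1 y = Fin q2 ->
  ER_le (J0 J1 J2 a) (Fin (p + (q1 + q2) / 2)).
Proof.
  intros a x y p q1 q2 Hxy Hp Hq1 Hq2. unfold J0. rewrite Hp.
  set (S := fun v => exists z1 z2, z1 + z2 = 2 * a /\ v = ER_plus (J1 z1) (J1 z2)).
  assert (Hb : forall v, S v -> ER_le (Fin (j1min + j1min)) v).
  { intros v [z1 [z2 [_ ->]]]. apply ER_plus_lb; auto. }
  destruct (ER_inf_spec S _ Hb) as [H1 H2].
  assert (HS : S (Fin (q1 + q2))). { exists x, y. split; auto. rewrite Hq1, Hq2. reflexivity. }
  specialize (H1 _ HS). specialize (H2 _ Hb).
  destruct (ER_inf S); simpl in *; try tauto. lra.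
Qed.

Lemma J0_nm (J1 J2 : R -> ER) j1min (HJ1b : forall z, ER_le (Fin j1min) (J1 z))
  (HJ2 : forall z, J2 z <> MInf) : forall a, J0 J1 J2 a <> MInf.
Proof.
  intros a. unfold J0.
  set (S := fun v => exists z1 z2, z1 + z2 = 2 * a /\ v = ER_plus (J1 z1) (J1 z2)).
  assert (Hb : forall v, S v -> ER_le (Fin (j1min + j1min)) v).
  { intros v [z1 [z2 [_ ->]]]. apply ER_plus_lb; auto. }
  destruct (ER_inf_spec S _ Hb) as [H1 H2].
  specialize (H2 _ Hb). apply ER_plus_nm; auto. apply ER_scale_nm.
  destruct (ER_inf S); simpl in *; try congruence; tauto.
Qed.

Lemma J0_fin_pos (J1 J2 : R -> ER) j1min (HJ1b : forall z, ER_le (Fin j1min) (J1 z))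
  (HJ2 : forall z, J2 z <> MInf) (HJ1 : forall z, J1 z <> MInf)
  (Hd : forall z, z > 0 -> J1 z <> PInf /\ J2 z <> PInf) :
  forall a, a > 0 -> J0 J1 J2 a = Fin (fval (J0 J1 J2 a)).
Proof.
  intros a Ha. destruct (Hd a Ha) as [A1 A2].
  destruct (J1 a) eqn:E1; try congruence. destruct (J2 a) eqn:E2; try congruence.
  pose proof (J0_le J1 J2 j1min HJ1b a a a x0 x x ltac:(lra) E2 E1 E1).
  pose proof (J0_nm J1 J2 j1min HJ1b HJ2 a).
  destruct (J0 J1 J2 a); simpl in *; try tauto; congruence.
Qed.

Lemma env_g_le (J0f : R -> ER) m gam l J0inf :
  J0f gam = Fin m -> gam < l -> ER_lim_pinf J0f J0inf ->
  forall g, ER_convex g -> (forall w, g w <> MInf) -> (forall w, ER_le (g w) (J0f w)) ->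
  ER_le (g l) (Fin m).
Proof.
  intros Hm Hl Hlim g Hc Hnm Hle.
  destruct (Hlim 1 ltac:(lra)) as [R0 HR].
  assert (Hgg : ER_le (g gam) (Fin m)) by (rewrite <- Hm; auto).
  destruct (ER_le_Fin_inv _ _ Hgg (Hnm gam)) as [gm [Egm Hgm]].
  assert (Key : forall z, z > R0 -> z > l -> exists c, g l = Fin c /\
     c <= m + (l - gam) / (z - gam) * (Rabs (J0inf + 1 - m))).
  { intros z Hz1 Hz2. destruct (HR z Hz1) as [v [Ev Hv]].
    assert (Hgz : ER_le (g z) (Fin v)) by (rewrite <- Ev; auto).
    destruct (ER_le_Fin_inv _ _ Hgz (Hnm z)) as [gz [Egz Hgz2]].
    set (tt := (z - l) / (z - gam)).
    assert (Ht : 0 < tt < 1).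
    { unfold tt. split. apply Rdiv_lt_0_compat; lra.
      apply (Rmult_lt_reg_r (z - gam)); [lra|]. unfold Rdiv. rewrite Rmult_assoc, Rinv_l; lra. }
    pose proof (Hc gam z tt Ht) as Hcv.
    replace (tt * gam + (1 - tt) * z) with l in Hcv.
    2:{ unfold tt. field_simplify; [|lra]. field. lra. }
    rewrite Egm, Egz in Hcv. simpl in Hcv.
    destruct (ER_le_Fin_inv _ _ Hcv (Hnm l)) as [c [Ec Hc2]]. exists c. split; auto.
    assert (E1 : 1 - tt = (l - gam) / (z - gam)) by (unfold tt; field; lra).
    rewrite <- E1.
    assert (Hv2 : gz < J0inf + 1) by (apply Rabs_def2 in Hv; lra).
    assert (tt * gm <= tt * m) by (apply Rmult_le_compat_l; lra).
    assert ((1 - tt) * gz <= (1 - tt) * (J0inf + 1)) by (apply Rmult_le_compat_l; lra).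
    assert ((1 - tt) * (J0inf + 1 - m) <= (1 - tt) * Rabs (J0inf + 1 - m))
      by (apply Rmult_le_compat_l; [lra| apply Rle_abs]).
    nra. }
  destruct (Key (Rmax R0 l + 1)) as [c [Ec _]]; try (pose proof (Rmax_l R0 l); pose proof (Rmax_r R0 l); lra).
  rewrite Ec. simpl. destruct (Rle_dec c m) as [|Hcm]; auto. exfalso.
  set (K := Rabs (J0inf + 1 - m) + 1).
  assert (HK : K > 0) by (unfold K; pose proof (Rabs_pos (J0inf + 1 - m)); lra).
  set (z := Rmax R0 l + 1 + (l - gam) * K / (c - m)).
  assert (Hz0 : (l - gam) * K / (c - m) > 0) by (apply Rdiv_lt_0_compat; nra).
  destruct (Key z) as [c' [Ec' Hc']]; try (unfold z; pose proof (Rmax_l R0 l); pose proof (Rmax_r R0 l); lra).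
  rewrite Ec in Ec'. inversion Ec'. subst c'.
  assert (Hzg : z - gam > (l - gam) * K / (c - m)) by (unfold z; pose proof (Rmax_r R0 l); lra).
  assert (Hq : (l - gam) / (z - gam) * K < c - m).
  { apply (Rmult_lt_reg_r (z - gam)); [lra|].
    replace ((l - gam) / (z - gam) * K * (z - gam)) with ((l - gam) * K) by (field; lra).
    apply (Rmult_lt_reg_r (/ (c - m))). apply Rinv_0_lt_compat; lra.
    replace ((c - m) * (z - gam) * / (c - m)) with (z - gam) by (field; lra).
    unfold Rdiv in Hzg. lra. }
  assert ((l - gam) / (z - gam) * Rabs (J0inf + 1 - m) <= (l - gam) / (z - gam) * K).
  { apply Rmult_le_compat_l. apply Rlt_le, Rdiv_lt_0_compat; lra. unfold K; lra. }
  lra.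
Qed.


Lemma gap_left (J0f : R -> ER) m gam
  (Hm : J0f gam = Fin m) (Hnm : forall z, J0f z <> MInf)
  (Hgmin : forall z, ER_le (J0f gam) (J0f z))
  (Hguniq : forall z, (forall w, ER_le (J0f z) (J0f w)) -> z = gam)
  (Henv : forall z, z <= gam -> J0f z = conv_lsc_env J0f z) :
  forall eps, eps > 0 -> exists eta, eta > 0 /\
    forall z, z <= gam - eps -> ER_le (Fin (m + eta)) (J0f z).
Proof.
  intros eps Heps. set (w := gam - eps).
  assert (Ha : exists a, a > m /\ ~ ER_le (J0f w) (Fin a)).
  { destruct (J0f w) eqn:Ew.
    - assert (m <= x) by (pose proof (Hgmin w) as H; rewrite Hm, Ew in H; exact H).
      destruct (Req_dec x m).
      + subst. exfalso. assert (w = gam). { apply Hguniq. intros w'. rewrite Ew, <- Hm. auto. }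
        unfold w in H0; lra.
      + exists ((m + x) / 2). split; [lra|]. simpl. lra.
    - exists (m + 1). split; [lra|]. simpl. tauto.
    - congruence. }
  destruct Ha as [a [Ham Hna]].
  exists (a - m). split; [lra|]. replace (m + (a - m)) with a by ring.
  assert (Hw : J0f w = conv_lsc_env J0f w) by (apply Henv; unfold w; lra).
  unfold conv_lsc_env in Hw.
  set (S := fun v => exists g : R -> ER, (forall w, g w <> MInf) /\ ER_convex g /\ ER_lsc g /\
             (forall w, ER_le (g w) (J0f w)) /\ v = g w) in Hw.
  destruct (ER_sup_cases S) as [[Hub Hlub]|HM]; [|rewrite HM in Hw; exfalso; apply (Hnm w); auto].
  assert (Hex : exists x, S x /\ ~ ER_le x (Fin a)).
  { apply NNPP. intros Hn. apply Hna. rewrite Hw. apply Hlub. intros x Hx.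
    apply NNPP. intros Hx2. apply Hn. exists x. split; auto. }
  destruct Hex as [x [[g [Hgnm [Hgc [_ [Hgle ->]]]]] Hgw]].
  assert (Hgg : ER_le (g gam) (Fin m)) by (rewrite <- Hm; auto).
  destruct (ER_le_Fin_inv _ _ Hgg (Hgnm gam)) as [gm [Egm Hgm]].
  intros z Hz. destruct (Rle_lt_or_eq_dec z w Hz) as [Hzw|Hzw].
  2:{ subst z. apply ER_not_le_Fin. intros H. apply Hgw. eapply ER_le_trans; eauto. }
  assert (Hzw' : z < gam - eps) by (unfold w in Hzw; lra).
  set (tt := (gam - w) / (gam - z)).
  assert (Ht : 0 < tt < 1).
  { unfold tt, w. split. apply Rdiv_lt_0_compat; lra.
    apply (Rmult_lt_reg_r (gam - z)); [lra|]. unfold Rdiv. rewrite Rmult_assoc, Rinv_l; lra. }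
  pose proof (Hgc z gam tt Ht) as Hcv.
  replace (tt * z + (1 - tt) * gam) with w in Hcv.
  2:{ unfold tt, w. field. lra. }
  rewrite Egm in Hcv.
  destruct (g z) eqn:Egz.
  - simpl in Hcv. apply ER_le_trans with (g z); [|auto]. rewrite Egz. simpl.
    destruct (Rle_dec a (tt * x + (1 - tt) * gm)) as [Hle|Hgt].
    + assert (tt * a <= tt * x + (1 - tt) * (gm - a)) by lra.
      assert ((1 - tt) * (gm - a) <= 0) by nra.
      assert (tt * a <= tt * x) by lra.
      apply Rmult_le_reg_l in H1; lra.
    + exfalso. apply Hgw. eapply ER_le_trans; [exact Hcv|]. simpl. lra.
  - apply ER_le_trans with (g z); [|auto]. rewrite Egz. simpl. auto.
  - congruence.
Qed.

Lemma cont_of_deriv (D : R -> Prop) (f : R -> R) x l :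
  (exists r, r > 0 /\ forall y, Rabs (y - x) < r -> D y) ->
  deriv_within D f x l -> continuity_pt f x.
Proof.
  intros [r [Hr HD]] Hd eps Heps.
  destruct (Hd 1 ltac:(lra)) as [d [Hd0 Hd1]].
  set (K := Rabs l + 1).
  exists (Rmin (Rmin r d) (eps / K)). split.
  { apply Rmin_pos; [apply Rmin_pos; lra|]. apply Rdiv_lt_0_compat; unfold K; pose proof (Rabs_pos l); lra. }
  intros y [[_ Hyx] Hy]. simpl in *. unfold R_dist in *.
  pose proof (Rmin_l (Rmin r d) (eps / K)). pose proof (Rmin_r (Rmin r d) (eps / K)).
  pose proof (Rmin_l r d). pose proof (Rmin_r r d).
  assert (Hyd : Rabs (y - x) < d) by lra.
  assert (HyD : D y) by (apply HD; lra).
  assert (Hyx0 : y - x <> 0) by lra.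
  specialize (Hd1 y HyD (not_eq_sym Hyx) Hyd).
  assert (E : f y - f x = ((f y - f x) / (y - x) - l) * (y - x) + l * (y - x)) by (field; auto).
  rewrite E. eapply Rle_lt_trans. apply Rabs_triang. rewrite !Rabs_mult.
  assert (HK : K > 0) by (unfold K; pose proof (Rabs_pos l); lra).
  assert (Rabs (y - x) < eps / K) by lra.
  assert (Rabs (y - x) * K < eps).
  { apply (Rmult_lt_reg_r (/ K)). apply Rinv_0_lt_compat; lra.
    rewrite Rmult_assoc, Rinv_r; [|lra]. unfold Rdiv in H3. lra. }
  pose proof (Rabs_pos (y - x)).
  assert (Rabs ((f y - f x) / (y - x) - l) * Rabs (y - x) <= 1 * Rabs (y - x))
    by (apply Rmult_le_compat_r; lra).
  unfold K in H4. nra.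
Qed.

Lemma gap_right (J0f : R -> ER) m gam J0inf
  (Hm : J0f gam = Fin m) (Hg : gam > 0)
  (Hgmin : forall z, ER_le (J0f gam) (J0f z))
  (Hguniq : forall z, (forall w, ER_le (J0f z) (J0f w)) -> z = gam)
  (Hfin : forall z, z > 0 -> J0f z = Fin (fval (J0f z)))
  (Hinf : m < J0inf) (Hlim : ER_lim_pinf J0f J0inf) (HC1 : C1_on (dom J0f) J0f) :
  forall eps, eps > 0 -> exists eta, eta > 0 /\
    forall z, z >= gam + eps -> ER_le (Fin (m + eta)) (J0f z).
Proof.
  intros eps Heps.
  destruct (Hlim ((J0inf - m) / 2) ltac:(lra)) as [R0 HR].
  set (A := gam + eps). set (B := Rmax A R0).
  destruct HC1 as [f' [Hf' _]].
  assert (Hcont : forall c, A <= c <= B -> continuity_pt (fun z => fval (J0f z)) c).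
  { intros c Hc. apply cont_of_deriv with (dom J0f) (f' c).
    - exists c. split; [unfold A in Hc; lra|]. intros y Hy. unfold dom. rewrite Hfin. congruence.
      apply Rabs_def2 in Hy. lra.
    - apply Hf'. unfold dom. rewrite Hfin; [congruence|unfold A in Hc; lra]. }
  destruct (continuity_ab_min _ A B (Rmax_l A R0) Hcont) as [xs [Hmin Hxs]].
  assert (Hxs0 : xs > 0) by (unfold A in Hxs; lra).
  assert (Hfx : m < fval (J0f xs)).
  { pose proof (Hgmin xs) as H. rewrite Hm, (Hfin xs Hxs0) in H. simpl in H.
    destruct (Req_dec m (fval (J0f xs))); [|lra]. exfalso.
    assert (xs = gam). { apply Hguniq. intros w. rewrite (Hfin xs Hxs0), <- H0, <- Hm. auto. }
    unfold A in Hxs; lra. }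
  exists (Rmin ((J0inf - m) / 2) (fval (J0f xs) - m)). split.
  { apply Rmin_pos; lra. }
  intros z Hz. pose proof (Rmin_l ((J0inf - m) / 2) (fval (J0f xs) - m)).
  pose proof (Rmin_r ((J0inf - m) / 2) (fval (J0f xs) - m)).
  destruct (Rle_dec z B).
  - rewrite (Hfin z) by (unfold A in Hz; lra). simpl.
    assert (fval (J0f xs) <= fval (J0f z)) by (apply Hmin; lra). lra.
  - destruct (HR z) as [v [Ev Hv]]. unfold B in n. pose proof (Rmax_r A R0). lra.
    rewrite Ev. simpl. apply Rabs_def2 in Hv. lra.
Qed.


Lemma affine_endpoint (u : R -> R) a b p q x : 0 <= a -> a < b -> b <= 1 -> cont_on01 u ->
  (forall y, a < y < b -> u y = p * y + q) -> (x = a \/ x = b) -> u x = p * x + q.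
Proof.
  intros Ha Hab Hb Hc Haff Hx.
  apply NNPP. intros Hne.
  set (e := Rabs (u x - (p * x + q)) / 2).
  assert (He : e > 0).
  { unfold e. apply Rdiv_lt_0_compat; [|lra]. apply Rabs_pos_lt. lra. }
  destruct (Hc x ltac:(destruct Hx; subst; lra) e He) as [d [Hd Hd1]].
  set (s := Rmin (Rmin d (b - a)) (e / (Rabs p + 1)) / 2).
  assert (Hs0 : s > 0).
  { unfold s. apply Rdiv_lt_0_compat; [|lra]. apply Rmin_pos; [apply Rmin_pos; lra|].
    apply Rdiv_lt_0_compat; [lra|]. pose proof (Rabs_pos p); lra. }
  pose proof (Rmin_l (Rmin d (b - a)) (e / (Rabs p + 1))).
  pose proof (Rmin_r (Rmin d (b - a)) (e / (Rabs p + 1))).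
  pose proof (Rmin_l d (b - a)). pose proof (Rmin_r d (b - a)).
  assert (Hsd : s < d) by (unfold s in *; lra).
  assert (Hsb : s < b - a) by (unfold s in *; lra).
  assert (Hsp : s * (Rabs p + 1) < e).
  { assert (s < e / (Rabs p + 1)) by (unfold s in *; lra).
    pose proof (Rabs_pos p).
    apply (Rmult_lt_compat_r (Rabs p + 1)) in H3; [|lra].
    replace (e / (Rabs p + 1) * (Rabs p + 1)) with e in H3 by (field; lra). lra. }
  assert (Hy : exists y, a < y < b /\ Rabs (y - x) = s).
  { destruct Hx; subst x.
    - exists (a + s). split; [lra|]. replace (a + s - a) with s by ring. apply Rabs_right; lra.
    - exists (b - s). split; [lra|]. replace (b - s - b) with (- s) by ring.
      rewrite Rabs_Ropp. apply Rabs_right; lra. }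
  destruct Hy as [y [Hy1 Hy2]].
  assert (Hy01 : 0 <= y <= 1) by lra.
  specialize (Hd1 y Hy01 ltac:(lra)).
  rewrite Haff in Hd1 by auto.
  assert (E : u x - (p * x + q) = - ((p * y + q) - u x) + p * (y - x)) by ring.
  assert (Rabs (u x - (p * x + q)) <= Rabs ((p * y + q) - u x) + Rabs p * Rabs (y - x)).
  { rewrite E, <- Rabs_mult, <- (Rabs_Ropp (p * y + q - u x)). apply Rabs_triang. }
  rewrite Hy2 in H3. pose proof (Rabs_pos p).
  unfold e in *. nra.
Qed.


Lemma ERsum_nm f a k : (forall j, f j <> MInf) -> ERsum f a k <> MInf.
Proof. intros Hf. revert a; induction k; intros a; simpl. congruence. apply ER_plus_nm; auto. Qed.

Lemma fval_scale c x : fval (ER_scale c x) = c * fval x.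
Proof. destruct x; simpl; ring. Qed.

Lemma plus4_fin a b c d v : a <> MInf -> b <> MInf -> c <> MInf -> d <> MInf ->
  ER_plus a (ER_plus b (ER_plus c d)) = Fin v ->
  exists x y z w, a = Fin x /\ b = Fin y /\ c = Fin z /\ d = Fin w /\ v = x + (y + (z + w)).
Proof.
  intros Ha Hb Hc Hd H.
  destruct (ER_plus_fin _ _ _ Ha (ER_plus_nm _ _ Hb (ER_plus_nm _ _ Hc Hd)) H) as [x [r1 [Ea [H1 Eb]]]].
  destruct (ER_plus_fin _ _ _ Hb (ER_plus_nm _ _ Hc Hd) H1) as [y [r2 [Ec [H2 Ed]]]].
  destruct (ER_plus_fin _ _ _ Hc Hd H2) as [z [w [Ee [Ef Eg]]]].
  exists x, y, z, w. subst. auto.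
Qed.

Lemma energy_bound (J1 J2 : R -> ER) m n l v0 v1 k1 k2 r (t : nat -> nat) hh (u : R -> R) E M
  (HJ1 : forall z, J1 z <> MInf) (HJ2 : forall z, J2 z <> MInf)
  (Hflow : forall z a b, J1 z = Fin a -> J2 z = Fin b -> m <= a + b)
  (Hnnn : forall x y p q1 q2, J2 ((x + y) / 2) = Fin p -> J1 x = Fin q1 -> J1 y = Fin q2 ->
            m <= p + (q1 + q2) / 2)
  (Hk : (0 < k1)%nat /\ (k1 < k2)%nat /\ (k2 + 2 < n)%nat)
  (Hh : (hh < r)%nat /\ (k1 <= t hh)%nat /\ (t (hh + 1) <= k2)%nat)
  (Hm2 : (t hh + 2 <= t (hh + 1))%nat)
  (HE : HnT J1 J2 n l v0 v1 k1 k2 r t u = Fin E)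
  (HEM : E <= m + M * lam n) :
  exists a b, J1 ((node u n (t hh + 1) - node u n (t hh)) / lam n) = Fin a /\
              J2 ((node u n (t hh + 1) - node u n (t hh)) / lam n) = Fin b /\
     (INR (t (hh + 1)%nat - t hh) - 1) * (a + b - m) <= M + m - (fval (J1 v0) + fval (J1 v1)) / 2.
Proof.
  unfold HnT in HE.
  destruct (excluded_middle_informative (in_AT n r t u)) as [HAT|]; [|congruence].
  unfold Hn in HE.
  destruct (excluded_middle_informative (in_An n u /\ BC n l v0 v1 u)) as [[HAn HBC]|]; [|congruence].
  cbv zeta in HE.
  set (L := lam n) in *.
  assert (EL : lam n = L) by reflexivity. clearbody L.
  set (d1 := fun i => (node u n (i + 1) - node u n i) / L).
  set (d2 := fun i => (node u n (i + 2) - node u n i) / (2 * L)).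
  assert (HL : L > 0).
  { rewrite <- EL. unfold lam. apply Rinv_0_lt_compat. apply lt_0_INR. lia. }
  assert (HLn : L * INR n = 1).
  { rewrite <- EL. unfold lam. apply Rinv_l. apply not_0_INR. lia. }
  set (f1 := fun i => fval (J1 (d1 i))).
  set (f2 := fun i => fval (J2 (d1 i))).
  set (g := fun i => fval (J2 (d2 i))).
  assert (Hsc : forall c x v, ER_scale c x = Fin v -> x = Fin (fval x)).
  { intros c x v H. destruct (ER_scale_fin _ _ _ H) as [a0 [-> _]]. reflexivity. }
  pose proof (fun H1 H2 H3 H4 => plus4_fin _ _ _ _ _ H1 H2 H3 H4 HE) as HP.
  edestruct HP as [E1 [E2 [E3 [E4 [HE1 [HE2 [HE3 [HE4 HEeq]]]]]]]];
    [apply ERsum_nm; intros; apply ER_scale_nm; auto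
    |apply ERsum_nm; intros; apply ER_scale_nm; auto
    |apply ERsum_nm; intros; apply ER_scale_nm; apply ER_plus_nm; auto
    |apply ERsum_nm; intros; apply ER_scale_nm; auto|].
  clear HP.
  destruct (ERsum_fin _ _ _ (fun j => ER_scale_nm _ _ (HJ1 _)) ltac:(rewrite HE1; congruence)) as [S1 T1].
  destruct (ERsum_fin _ _ _ (fun j => ER_scale_nm _ _ (HJ2 _)) ltac:(rewrite HE2; congruence)) as [S2 T2].
  destruct (ERsum_fin _ _ _ (fun j => ER_scale_nm _ _ (ER_plus_nm _ _ (HJ2 _) (HJ2 _))) ltac:(rewrite HE3; congruence)) as [S3 T3].
  destruct (ERsum_fin _ _ _ (fun j => ER_scale_nm _ _ (HJ2 _)) ltac:(rewrite HE4; congruence)) as [S4 T4].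
  rewrite HE1 in S1. rewrite HE2 in S2. rewrite HE3 in S3. rewrite HE4 in S4.
  injection S1 as S1. injection S2 as S2. injection S3 as S3. injection S4 as S4.
  assert (FJ1 : forall i, (i < n)%nat -> J1 (d1 i) = Fin (f1 i)).
  { intros i Hi. eapply Hsc. apply (T1 i). lia. }
  assert (FG : forall i, ((i < k1)%nat \/ (k2 - 1 <= i < n - 1)%nat) -> J2 (d2 i) = Fin (g i)).
  { intros i [Hi|Hi]. eapply Hsc. apply (T2 i). lia. eapply Hsc.
    apply (T4 i). lia. }
  assert (FJ2 : forall i, (k1 <= i < k2 - 1)%nat -> J2 (d1 i) = Fin (f2 i) /\ J2 (d1 (i + 1)%nat) = Fin (f2 (i + 1)%nat)).
  { intros i Hi. pose proof (T3 i ltac:(lia)) as H. apply Hsc in H.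
    destruct (ER_plus_fin _ _ _ (HJ2 _) (HJ2 _) H) as [a1 [b1 [Ha1 [Hb1 _]]]].
    assert (A1 : J2 (d1 i) = Fin a1) by exact Ha1.
    assert (A2 : J2 (d1 (i + 1)%nat) = Fin b1) by exact Hb1.
    unfold f2. rewrite A1, A2. split; reflexivity. }
  assert (ES1 : E1 = L * rsum f1 0 n).
  { rewrite S1, <- rsum_scal. apply rsum_ext. intros; apply fval_scale. }
  assert (ES2 : E2 = L * rsum g 0 k1).
  { rewrite S2, <- rsum_scal. apply rsum_ext. intros; apply fval_scale. }
  assert (ES4 : E4 = L * rsum g (k2 - 1) (n - k2)).
  { rewrite S4, <- rsum_scal. apply rsum_ext. intros; apply fval_scale. }
  assert (ES3 : E3 = L * rsum (fun i => (f2 i + f2 (i + 1)%nat) / 2) k1 (k2 - 1 - k1)).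
  { rewrite S3, <- rsum_scal. apply rsum_ext. intros i Hi. rewrite fval_scale.
    destruct (FJ2 i ltac:(lia)) as [A1 A2].
    unfold d1 in A1, A2. rewrite A1, A2. simpl. field. }
  destruct Hk as [Hk1 [Hk12 Hk2n]]. destruct Hh as [Hhr [Hh1 Hh2]].
  destruct HBC as [BC0 [BC1 [BC2 BC3]]]. rewrite EL in BC1, BC2.
  set (th := t hh) in *. set (th' := t (hh + 1)%nat) in *.
  destruct (HAT hh Hhr) as [p0 [q0 Haff]].
  destruct HAn as [Hcont _].
  rewrite EL in Haff.
  assert (HthL : 0 <= INR th * L) by (apply Rmult_le_pos; [apply pos_INR|lra]).
  assert (Hthth : INR th * L < INR th' * L) by (apply Rmult_lt_compat_r; [lra|apply lt_INR; lia]).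
  assert (Hth1 : INR th' * L <= 1).
  { rewrite <- HLn. rewrite Rmult_comm. apply Rmult_le_compat_l; [lra|apply le_INR; lia]. }
  assert (Hnode : forall j, (th <= j <= th')%nat -> node u n j = p0 * (INR j * L) + q0).
  { intros j Hj. unfold node. rewrite EL.
    destruct (Nat.eq_dec j th) as [->|Hj1].
    { apply affine_endpoint with (INR th * L) (INR th' * L); auto. }
    destruct (Nat.eq_dec j th') as [->|Hj2].
    { apply affine_endpoint with (INR th * L) (INR th' * L); auto. }
    apply Haff. split; apply Rmult_lt_compat_r; try lra; apply lt_INR; lia. }
  assert (Hd1 : forall j, (th <= j < th')%nat -> d1 j = p0).
  { intros j Hj. unfold d1. cbv beta. rewrite !Hnode by lia. rewrite plus_INR. rewrite INR_1. field. lra. }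
  assert (Ed2 : forall i, d2 i = (d1 i + d1 (i + 1)%nat) / 2).
  { intros i. unfold d2, d1. cbv beta. replace (i + 2)%nat with (i + 1 + 1)%nat by lia. field. lra. }
  assert (D0 : d1 0%nat = v0).
  { unfold d1. cbv beta. replace (0 + 1)%nat with 1%nat by reflexivity. rewrite BC1, BC0. field. lra. }
  assert (D1 : d1 (n - 1)%nat = v1).
  { unfold d1. cbv beta. replace (n - 1 + 1)%nat with n by lia. rewrite BC3, BC2. field. lra. }
  set (Q := fun i => (f1 i + f1 (i + 1)%nat) / 2).
  set (Hm := fun i => Q i + (f2 i + f2 (i + 1)%nat) / 2).
  assert (HQ : rsum Q 0 (n - 1) = rsum f1 0 n - (f1 0%nat + f1 (n - 1)%nat) / 2) by (apply rsum_pairs; lia).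
  assert (Hs1 : rsum Q 0 (n - 1) = rsum Q 0 k1 + rsum Q k1 (k2 - 1 - k1) + rsum Q (k2 - 1) (n - k2)).
  { replace (n - 1)%nat with (k1 + (k2 - 1 - k1) + (n - k2))%nat by lia.
    rewrite (rsum_split Q 0 (k1 + (k2 - 1 - k1)) (n - k2)).
    rewrite (rsum_split Q 0 k1 (k2 - 1 - k1)).
    replace (0 + (k1 + (k2 - 1 - k1)))%nat with (k2 - 1)%nat by lia.
    replace (0 + k1)%nat with k1 by lia. ring. }
  assert (Hs2 : rsum Hm k1 (k2 - 1 - k1) = rsum Hm k1 (th - k1) + rsum Hm th (th' - th - 1) + rsum Hm (th' - 1) (k2 - th')).
  { replace (k2 - 1 - k1)%nat with ((th - k1) + (th' - th - 1) + (k2 - th'))%nat by lia.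
    rewrite (rsum_split Hm k1 ((th - k1) + (th' - th - 1)) (k2 - th')).
    rewrite (rsum_split Hm k1 (th - k1) (th' - th - 1)).
    replace (k1 + (th - k1 + (th' - th - 1)))%nat with (th' - 1)%nat by lia.
    replace (k1 + (th - k1))%nat with th by lia. ring. }
  assert (Hpair : forall i, ((i < k1)%nat \/ (k2 - 1 <= i < n - 1)%nat) -> m <= Q i + g i).
  { intros i Hi. pose proof (FG i Hi) as A. rewrite Ed2 in A.
    pose proof (Hnnn _ _ _ _ _ A (FJ1 i ltac:(lia)) (FJ1 (i + 1)%nat ltac:(lia))). unfold Q. lra. }
  assert (Hmid : forall i, (k1 <= i < k2 - 1)%nat -> m <= Hm i).
  { intros i Hi. destruct (FJ2 i Hi) as [A1 A2].
    pose proof (Hflow _ _ _ (FJ1 i ltac:(lia)) A1).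
    pose proof (Hflow _ _ _ (FJ1 (i + 1)%nat ltac:(lia)) A2). unfold Hm, Q. lra. }
  assert (B1 : INR k1 * m <= rsum (fun i => Q i + g i) 0 k1) by (apply rsum_ge; intros; apply Hpair; lia).
  assert (B4 : INR (n - k2) * m <= rsum (fun i => Q i + g i) (k2 - 1) (n - k2)) by (apply rsum_ge; intros; apply Hpair; lia).
  assert (B2 : INR (th - k1) * m <= rsum Hm k1 (th - k1)) by (apply rsum_ge; intros; apply Hmid; lia).
  assert (B3 : INR (k2 - th') * m <= rsum Hm (th' - 1) (k2 - th')) by (apply rsum_ge; intros; apply Hmid; lia).
  assert (Bel : rsum Hm th (th' - th - 1) = INR (th' - th - 1) * (f1 th + f2 th)).
  { rewrite <- (rsum_const _ th). apply rsum_ext. intros i Hi. unfold Hm, Q, f1, f2. cbv beta.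
    rewrite !Hd1 by lia. field. }
  assert (ES3' : E3 = L * (rsum Hm k1 (k2 - 1 - k1) - rsum Q k1 (k2 - 1 - k1))).
  { rewrite ES3. unfold Hm. rewrite rsum_plus. ring. }
  assert (Hnat : (k1 + (th - k1) + (th' - th - 1) + (k2 - th') + (n - k2) + 1 = n)%nat) by lia.
  apply (f_equal INR) in Hnat. rewrite !plus_INR in Hnat. rewrite INR_1 in Hnat.
  assert (Hnat2 : (th' - th - 1 + 1 = th' - th)%nat) by lia.
  apply (f_equal INR) in Hnat2. rewrite !plus_INR in Hnat2. rewrite INR_1 in Hnat2.
  rewrite rsum_plus in B1, B4.
  exists (f1 th), (f2 th). split; [exact (FJ1 th ltac:(lia))|]. split; [exact (proj1 (FJ2 th ltac:(lia)))|].
  assert (Bnd : (fval (J1 v0) + fval (J1 v1)) / 2 = (f1 0%nat + f1 (n - 1)%nat) / 2).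
  { unfold f1. rewrite D0, D1. reflexivity. }
  rewrite Bnd.
  set (X := (INR (th' - th) - 1) * (f1 th + f2 th - m)).
  set (B := (f1 0%nat + f1 (n - 1)%nat) / 2).
  assert (HW : E >= L * (B + (INR n - 1) * m + X)).
  { rewrite HEeq, ES1, ES2, ES3', ES4. unfold X, B.
    assert (L * (rsum f1 0 n + rsum g 0 k1 + (rsum Hm k1 (k2 - 1 - k1) - rsum Q k1 (k2 - 1 - k1)) + rsum g (k2 - 1) (n - k2))
       >= L * ((f1 0%nat + f1 (n - 1)%nat) / 2 + (INR n - 1) * m + (INR (th' - th) - 1) * (f1 th + f2 th - m))).
    { apply Rle_ge, Rmult_le_compat_l; [lra|].
      assert (INR n - 1 = INR k1 + INR (th - k1) + INR (th' - th - 1) + INR (k2 - th') + INR (n - k2)) by lra.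
      rewrite H. assert (INR (th' - th) - 1 = INR (th' - th - 1)) by lra. rewrite H0.
      lra. }
    lra. }
  assert (L * (B - m + X - M) <= 0).
  { assert (L * (B + (INR n - 1) * m + X) = L * (B - m + X - M) + m * (L * INR n) + L * M) by ring.
    rewrite HLn in H. lra. }
  assert (B - m + X - M <= 0).
  { destruct (Rle_dec (B - m + X - M) 0); auto. exfalso.
    assert (0 < L * (B - m + X - M)) by (apply Rmult_lt_0_compat; lra). lra. }
  unfold X in *. lra.
Qed.


Theorem lemma4p7
  (J1 J2 Psi : R -> ER) (alpha c1 c2 delta1 delta2 gamma J0inf : R)
  (l v0 v1 : R) (k1 k2 r : nat -> nat) (t : nat -> nat -> nat) (h : nat -> nat)
  (u : nat -> R -> R) (N0 : nat)
  (* J1, J2 : R -> (-oo,+oo] *)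
  (HJ1 : forall z, J1 z <> MInf) (HJ2 : forall z, J2 z <> MInf)
  (* [LJ1] *)
  (LJ1 : ~ exists z, J0 J1 J2 z = conv_lsc_env (J0 J1 J2) z /\
           exists d p q, d > 0 /\ forall y, Rabs (y - z) < d -> J0 J1 J2 y = Fin (p * y + q))
  (* [LJ2] (for z in the domain of J0) *)
  (LJ2 : forall z, J0 J1 J2 z = conv_lsc_env (J0 J1 J2) z -> dom (J0 J1 J2) z ->
           exists! p : R * R, fst p + snd p = 2 * z /\
             J0 J1 J2 z = ER_plus (J2 z) (ER_scale (1/2) (ER_plus (J1 (fst p)) (J1 (snd p)))))
  (* [LJ3] *)
  (Halpha : 0 < alpha <= 1)
  (LJ3a : C1alpha_on (dom J1) J1 alpha) (LJ3b : C1alpha_on (dom J2) J2 alpha)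
  (LJ3c : C1_on (dom (J0 J1 J2)) (J0 J1 J2))
  (LJ3d : forall z, dom J1 z <-> dom J2 z)
  (LJ3e : forall z, z > 0 -> dom J1 z)
  (LJ3f : ER_lim_pinf J1 0) (LJ3g : ER_lim_pinf J2 0)
  (LJ3h : ER_lim_pinf (J0 J1 J2) J0inf)
  (* [LJ4] *)
  (HPsi0 : forall z, ER_le (Fin 0) (Psi z)) (HPsic : ER_convex Psi)
  (HPsilim : forall M, exists K, forall z, z < K -> ER_le (Fin (M * Rabs z)) (Psi z))
  (Hc1 : c1 > 0) (Hc2 : c2 > 0)
  (HPsiJ1 : forall z, ER_le (ER_scale c1 (ER_plus (Psi z) (Fin (-1)))) (J1 z) /\
                      ER_le (J1 z) (ER_scale c2 (ER_max (Psi z) (Fin (Rabs z)))))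
  (HPsiJ2 : forall z, ER_le (ER_scale c1 (ER_plus (Psi z) (Fin (-1)))) (J2 z) /\
                      ER_le (J2 z) (ER_scale c2 (ER_max (Psi z) (Fin (Rabs z)))))
  (Hd1 : delta1 > 0) (Hd2 : delta2 > 0) (Hg : gamma > 0)
  (Hd1min : forall z, ER_le (J1 delta1) (J1 z))
  (Hd1uniq : forall z, (forall w, ER_le (J1 z) (J1 w)) -> z = delta1)
  (Hd2min : forall z, ER_le (J2 delta2) (J2 z))
  (Hd2uniq : forall z, (forall w, ER_le (J2 z) (J2 w)) -> z = delta2)
  (Hgmin : forall z, ER_le (J0 J1 J2 gamma) (J0 J1 J2 z))
  (Hguniq : forall z, (forall w, ER_le (J0 J1 J2 z) (J0 J1 J2 w)) -> z = gamma)
  (HJ1sc : strictly_convex_on (fun z => z < delta1 /\ dom J1 z) J1)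
  (HJ2sc : strictly_convex_on (fun z => z < delta2 /\ dom J2 z) J2)
  (HJ0inf : ER_lt (J0 J1 J2 gamma) (Fin J0inf))
  (HJ0env : forall z, z <= gamma -> J0 J1 J2 z = conv_lsc_env (J0 J1 J2) z)
  (* data *)
  (Hl : l > gamma) (Hv0 : v0 > 0) (Hv1 : v1 > 0)
  (Hk : forall n, (N0 <= n)%nat -> (0 < k1 n)%nat /\ (k1 n < k2 n)%nat /\ (k2 n + 2 < n)%nat)
  (* assumption (K) *)
  (K1 : forall M : nat, exists N, forall n, (N <= n)%nat -> (M <= k1 n)%nat)
  (K2 : forall M : nat, exists N, forall n, (N <= n)%nat -> (M <= n - k2 n)%nat)
  (K3 : Un_cv (fun n => lam n * INR (k1 n)) 0)
  (K4 : Un_cv (fun n => lam n * INR (n - k2 n)) 0)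
  (* the triangulations T_n *)
  (Ht0 : forall n, (N0 <= n)%nat -> t n 0%nat = 0%nat)
  (Htr : forall n, (N0 <= n)%nat -> t n (r n) = n)
  (Htinc : forall n i, (N0 <= n)%nat -> (i < r n)%nat -> (t n i < t n (i + 1))%nat)
  (* bounded first order energy *)
  (Hbound : exists M : R, forall n, (N0 <= n)%nat ->
      ER_le (H1nT J1 J2 n l v0 v1 (k1 n) (k2 n) (r n) (t n) (u n)) (Fin M))
  (* the indices h_n *)
  (Hh : forall n, (N0 <= n)%nat ->
      (h n < r n)%nat /\ (k1 n <= t n (h n))%nat /\ (t n (h n + 1) <= k2 n)%nat)
  (Hliminf : forall M : nat, exists N, forall n, (N <= n)%nat ->
      (M <= t n (h n + 1)%nat - t n (h n))%nat) :
  Un_cv (fun n => (node (u n) n (t n (h n) + 1) - node (u n) n (t n (h n))) / lam n) gamma.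
Proof.
  assert (HJ11 : J1 1 <> PInf) by (apply LJ3e; lra).
  assert (Hd1f : J1 delta1 <> PInf).
  { intro E. pose proof (Hd1min 1) as H. rewrite E in H. apply ER_le_PInf_inv in H. auto. }
  assert (Hd1m := HJ1 delta1).
  destruct (J1 delta1) eqn:Ed1; [|congruence|congruence].
  rename x into j1min.
  assert (HJ1b : forall z, ER_le (Fin j1min) (J1 z)) by (intros z; pose proof (Hd1min z) as H; try rewrite Ed1 in H; exact H).
  assert (Hd : forall z, z > 0 -> J1 z <> PInf /\ J2 z <> PInf).
  { intros z Hz. split. apply LJ3e; auto. apply (proj1 (LJ3d z)). apply LJ3e; auto. }
  assert (HJ0nm := J0_nm J1 J2 j1min HJ1b HJ2).
  assert (Hfin0 := J0_fin_pos J1 J2 j1min HJ1b HJ2 HJ1 Hd).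
  assert (Hex : exists m, J0 J1 J2 gamma = Fin m).
  { destruct (J0 J1 J2 gamma) eqn:Eg'; eauto.
    - exfalso. destruct HJ0inf as [H _]. simpl in H. auto.
    - exfalso. apply (HJ0nm gamma); auto. }
  destruct Hex as [m Eg].
  pose proof HJ0inf as HJ0inf'. rewrite Eg in HJ0inf'.
  assert (Hm_inf : m < J0inf).
  { destruct HJ0inf' as [H1 H2]. simpl in H1. destruct (Req_dec m J0inf); [subst; congruence|lra]. }
  assert (Hgm : forall z, ER_le (Fin m) (J0 J1 J2 z)) by (intros z; rewrite <- Eg; apply Hgmin).
  assert (Hflow : forall z a b, J1 z = Fin a -> J2 z = Fin b -> m <= a + b).
  { intros z a b Ha Hb. pose proof (J0_le J1 J2 j1min HJ1b z z z b a a ltac:(lra) Hb Ha Ha) as H.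
    pose proof (ER_le_trans _ _ _ (Hgm z) H) as H2. simpl in H2. lra. }
  assert (Hnnn : forall x y p q1 q2, J2 ((x + y) / 2) = Fin p -> J1 x = Fin q1 -> J1 y = Fin q2 ->
            m <= p + (q1 + q2) / 2).
  { intros x y p q1 q2 Hp H1 H2.
    pose proof (J0_le J1 J2 j1min HJ1b ((x + y) / 2) x y p q1 q2 ltac:(field) Hp H1 H2) as H.
    pose proof (ER_le_trans _ _ _ (Hgm _) H) as H3. simpl in H3. lra. }
  assert (Fgap : forall eps, eps > 0 -> exists eta, eta > 0 /\ forall z a b, J1 z = Fin a -> J2 z = Fin b ->
            Rabs (z - gamma) >= eps -> m + eta <= a + b).
  { intros eps Heps.
    destruct (gap_left (J0 J1 J2) m gamma Eg HJ0nm Hgmin Hguniq HJ0env eps Heps) as [e1 [He1 HL1]].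
    destruct (gap_right (J0 J1 J2) m gamma J0inf Eg Hg Hgmin Hguniq Hfin0 Hm_inf LJ3h LJ3c eps Heps) as [e2 [He2 HR1]].
    exists (Rmin e1 e2). split; [apply Rmin_pos; lra|].
    intros z a b Ha Hb Hz.
    pose proof (J0_le J1 J2 j1min HJ1b z z z b a a ltac:(lra) Hb Ha Ha) as H.
    assert (HH : ER_le (Fin (m + Rmin e1 e2)) (J0 J1 J2 z)).
    { pose proof (Rmin_l e1 e2). pose proof (Rmin_r e1 e2).
      destruct (Rle_dec z (gamma - eps)).
      - eapply ER_le_trans; [|apply HL1; auto]. simpl. lra.
      - assert (z >= gamma + eps).
        { destruct (Rcase_abs (z - gamma)) as [Hn|Hp].
          - rewrite Rabs_left in Hz by lra. lra.
          - rewrite Rabs_right in Hz by lra. lra. }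
        eapply ER_le_trans; [|apply HR1; auto]. simpl. lra. }
    pose proof (ER_le_trans _ _ _ HH H) as H2. simpl in H2. lra. }
  assert (Henv : ER_le (conv_lsc_env (J0 J1 J2) l) (Fin m)).
  { unfold conv_lsc_env.
    destruct (ER_sup_cases (fun v => exists g : R -> ER,
             (forall w, g w <> MInf) /\ ER_convex g /\ ER_lsc g /\
             (forall w, ER_le (g w) (J0 J1 J2 w)) /\ v = g l)) as [[_ Hl2]|HM].
    - apply Hl2. intros x [g [Hg1 [Hg2 [_ [Hg4 ->]]]]].
      apply (env_g_le (J0 J1 J2) m gamma l J0inf Eg Hl LJ3h g Hg2 Hg1 Hg4).
    - rewrite HM. simpl. auto. }
  destruct Hbound as [M HM].
  set (C := M + m - (fval (J1 v0) + fval (J1 v1)) / 2).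
  assert (HEn : forall n, (N0 <= n)%nat -> exists E,
     HnT J1 J2 n l v0 v1 (k1 n) (k2 n) (r n) (t n) (u n) = Fin E /\ E <= m + M * lam n).
  { intros n HnN. specialize (HM n HnN).
    destruct (Hk n HnN) as [Hk1 [Hk2 Hk3]].
    assert (HL : lam n > 0) by (unfold lam; apply Rinv_0_lt_compat, lt_0_INR; lia).
    assert (HnM : HnT J1 J2 n l v0 v1 (k1 n) (k2 n) (r n) (t n) (u n) <> MInf).
    { unfold HnT, Defs.Hn. destruct (excluded_middle_informative _); [|congruence].
      destruct (excluded_middle_informative _); [|congruence]. cbv zeta.
      repeat apply ER_plus_nm; apply ERsum_nm; intros; apply ER_scale_nm; try apply ER_plus_nm; auto. }
    unfold H1nT in HM.
    destruct (HnT J1 J2 n l v0 v1 (k1 n) (k2 n) (r n) (t n) (u n)) as [E| |] eqn:HE; [|simpl in HM; tauto|congruence].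
    exists E. split; auto.
    destruct (conv_lsc_env (J0 J1 J2) l) as [e0| |] eqn:Ee.
    - simpl in HM, Henv.
      assert (E + - e0 <= M * lam n).
      { replace (E + - e0) with (lam n * (/ lam n * (E + - e0))) by (field; lra).
        rewrite (Rmult_comm M). apply Rmult_le_compat_l; lra. }
      lra.
    - simpl in Henv. tauto.
    - simpl in HM. tauto. }
  intros eps Heps.
  destruct (Fgap eps Heps) as [eta [Heta Hgap]].
  destruct (INR_unbounded (Rabs C / eta + 2)) as [K HK].
  destruct (Hliminf K) as [N1 HN1].
  exists (Nat.max N0 N1). intros n Hn.
  assert (Hn0 : (N0 <= n)%nat) by lia. assert (Hn1 : (N1 <= n)%nat) by lia.
  specialize (HN1 n Hn1).
  assert (HC0 : Rabs C / eta >= 0) by (apply Rle_ge; unfold Rdiv; apply Rmult_le_pos; [apply Rabs_pos|apply Rlt_le, Rinv_0_lt_compat; lra]).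
  assert (HK2 : (2 <= K)%nat).
  { destruct (Compare_dec.le_lt_dec 2 K); auto. exfalso. assert (INR K <= INR 1) by (apply le_INR; lia).
    rewrite INR_1 in H. lra. }
  destruct (HEn n Hn0) as [E [HE HEM]].
  destruct (energy_bound J1 J2 m n l v0 v1 (k1 n) (k2 n) (r n) (t n) (h n) (u n) E M
     HJ1 HJ2 Hflow Hnnn (Hk n Hn0) (Hh n Hn0) ltac:(lia) HE HEM) as [a [b [Ha [Hb Hab]]]].
  unfold R_dist.
  destruct (Rlt_dec (Rabs ((node (u n) n (t n (h n) + 1) - node (u n) n (t n (h n))) / lam n - gamma)) eps) as [Hlt|Hge]; auto.
  exfalso.
  assert (Hg2 := Hgap _ a b Ha Hb ltac:(lra)).
  assert (HKm : INR K <= INR (t n (h n + 1)%nat - t n (h n))) by (apply le_INR; lia).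
  fold C in Hab.
  assert (C <= Rabs C) by apply Rle_abs.
  assert (Rabs C / eta * eta = Rabs C) by (field; lra).
  assert ((INR (t n (h n + 1)%nat - t n (h n)) - 1) * eta <= (INR (t n (h n + 1)%nat - t n (h n)) - 1) * (a + b - m))
    by (apply Rmult_le_compat_l; lra).
  assert ((Rabs C / eta + 1) * eta <= (INR (t n (h n + 1)%nat - t n (h n)) - 1) * eta)
    by (apply Rmult_le_compat_r; lra).
  nra.
Qed.
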